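(* Let $\omega$ be a circle with center $O$ and $\xi$ an ellipse with center $O$ lying inside $\omega$. Let $(u_1,\dots,u_n)$ be a Poncelet $n$-gon for the pair $(\omega,\xi)$. Then for each $k$, the sum of squared lengths of its $k$-diagonals, $\sum_{i=1}^n|u_{i+k}-u_i|^2$, is constant in the Poncelet family of $n$-gons containing $(u_1,\dots,u_n)$.
   Context: Indices are mod $n$. A Poncelet $n$-gon for a pair of conics $(C,D)$, $D$ inside $C$, is a closed polygon with all vertices on $C$ and all sides tangent to $D$. By the Poncelet porism, if one such closed $n$-gon exists, then starting from any point of $C$ and successively drawing tangent lines to $D$ (in the same rotational sense) produces a closed $n$-gon; the Poncelet family is this continuous 1-parameter family. *)

(* Defs.v *)
From Stdlib Require Import Reals Lra Lia List.
Open Scope R_scope.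

Definition pt := (R * R)%type.

Definition dist2 (p q : pt) : R :=
  (fst p - fst q) ^ 2 + (snd p - snd q) ^ 2.

Definition on_circle (O : pt) (r : R) (p : pt) : Prop := dist2 p O = r ^ 2.

(* ellipse with center O, semi-axes a, b, first axis along the unit
   vector (c, s) (second axis along (-s, c)) *)
Definition on_ellipse (O : pt) (a b c s : R) (p : pt) : Prop :=
  let dx := fst p - fst O in
  let dy := snd p - snd O in
  (c * dx + s * dy) ^ 2 / a ^ 2 + (- s * dx + c * dy) ^ 2 / b ^ 2 = 1.

Definition on_line (p q x : pt) : Prop :=
  (fst x - fst p) * (snd q - snd p) = (snd x - snd p) * (fst q - fst p).

(* the line through distinct points p, q is tangent to the ellipse:
   it meets the (convex) ellipse in exactly one point *)
Definition tangent_line (O : pt) (a b c s : R) (p q : pt) : Prop :=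
  p <> q /\ exists! x : pt, on_ellipse O a b c s x /\ on_line p q x.

(* Poncelet n-gon (u_0, ..., u_{n-1}), indices mod n, for the pair
   (circle (O,r), ellipse): vertices on the circle, every side tangent to
   the ellipse, and consecutive sides are distinct tangent lines
   (the polygon never backtracks, i.e. u_{i+2} <> u_i). *)
Definition poncelet_ngon (O : pt) (r : R) (O' : pt) (a b c s : R)
    (n : nat) (u : nat -> pt) : Prop :=
  (3 <= n)%nat /\
  forall i : nat, (i < n)%nat ->
    on_circle O r (u i) /\
    tangent_line O' a b c s (u i) (u ((i + 1) mod n)) /\
    u ((i + 2) mod n) <> u i.

Definition diag_sum (n k : nat) (u : nat -> pt) : R :=
  fold_right Rplus 0 (map (fun i => dist2 (u ((i + k) mod n)) (u i)) (seq 0 n)).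

(* Main.v *)
Require Import Defs.
From Stdlib Require Import Reals Lra Lia List.
Open Scope R_scope.

Ltac lc1 H1 c1 := match type of H1 with ?e1 = 0 =>
  apply Rminus_diag_uniq; transitivity (c1*e1); [ring | rewrite H1; ring] end.
Ltac lc2 H1 H2 c1 c2 := match type of H1 with ?e1 = 0 => match type of H2 with ?e2 = 0 =>
  apply Rminus_diag_uniq; transitivity (c1*e1+c2*e2); [ring | rewrite H1, H2; ring] end end.

Definition good (p q e : R) := 0 < p /\ 0 < q /\ -p < e < p /\ -q < e < q.

Lemma mm_gt p q e x y : good p q e -> x^2+y^2 = 1 -> e^2 < p^2*x^2+q^2*y^2.
Proof.
  intros (Hp&Hq&He1&He2) Hu.
  assert (e^2 < p^2) by nra. assert (e^2 < q^2) by nra.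
  assert (0 <= x^2) by nra. assert (0 <= y^2) by nra.
  assert (e^2 = e^2*x^2+e^2*y^2) by (rewrite <- Rmult_plus_distr_l, Hu; ring).
  destruct (Rle_lt_dec (x^2) 0).
  - assert (x^2 = 0) by lra. assert (y^2 = 1) by lra. nra.
  - nra.
Qed.

Lemma mm_pos p q e x y : good p q e -> x^2+y^2 = 1 -> 0 < p^2*x^2+q^2*y^2.
Proof. intros G Hu. pose proof (mm_gt _ _ _ _ _ G Hu). nra. Qed.

Lemma lin_pos p q e x y : good p q e -> x^2+y^2 = 1 -> e^2 < (p*x^2+q*y^2)^2.
Proof.
  intros (Hp&Hq&He1&He2) Hu.
  destruct (Rle_lt_dec p q).
  - assert (p <= p*x^2+q*y^2) by nra. nra.
  - assert (q <= p*x^2+q*y^2) by nra. nra.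
Qed.


Lemma w_unit p q e x y w m : m = p^2*x^2+q^2*y^2 -> m <> 0 ->
  w^2 - (p^2*x^2+q^2*y^2-e^2) = 0 ->
  ((e*p*x - w*q*y)/m)^2 + ((e*q*y + w*p*x)/m)^2 = 1.
Proof.
  intros Hm0 Hm Hw.
  assert (E: (e*p*x-w*q*y)^2+(e*q*y+w*p*x)^2 = m^2)
    by (subst m; lc1 Hw (p^2*x^2+q^2*y^2)).
  replace (((e*p*x - w*q*y)/m)^2 + ((e*q*y + w*p*x)/m)^2)
    with (((e*p*x-w*q*y)^2+(e*q*y+w*p*x)^2)/m^2) by (field; auto).
  rewrite E. field. auto.
Qed.

Lemma w_rel p q e x y w m : m = p^2*x^2+q^2*y^2 -> m <> 0 ->
  p*x*((e*p*x - w*q*y)/m) + q*y*((e*q*y + w*p*x)/m) = e.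
Proof. intros Hm0 Hm.
  replace (p*x*((e*p*x - w*q*y)/m) + q*y*((e*q*y + w*p*x)/m)) with (e*(p^2*x^2+q^2*y^2)/m) by (field; auto).
  rewrite <- Hm0. field. auto. Qed.

Lemma w_cross p q e x y w m : m = p^2*x^2+q^2*y^2 -> m <> 0 ->
  p*x*((e*q*y + w*p*x)/m) - q*y*((e*p*x - w*q*y)/m) = w.
Proof. intros Hm0 Hm.
  replace (p*x*((e*q*y + w*p*x)/m) - q*y*((e*p*x - w*q*y)/m)) with (w*(p^2*x^2+q^2*y^2)/m) by (field; auto).
  rewrite <- Hm0. field. auto. Qed.

Lemma w_rhoN_sq p q e x y w m : m = p^2*x^2+q^2*y^2 -> m <> 0 ->
  w^2 - (p^2*x^2+q^2*y^2-e^2) = 0 -> y^2 - (1 - x^2) = 0 ->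
  ((e*(q^2-p^2)*x*y + w*p*q)/m)^2 =
  p^2*((e*p*x - w*q*y)/m)^2 + q^2*((e*q*y + w*p*x)/m)^2 - e^2.
Proof.
  intros Hm0 Hm Hw Hu.
  assert (E: (e*(q^2-p^2)*x*y+w*p*q)^2 = (p^2*(e*p*x-w*q*y)^2+q^2*(e*q*y+w*p*x)^2 - e^2*m^2)).
  { subst m. lc2 Hw Hu ((p^2*q^2) + (-y^2*p^2*q^2) + (-x^2*p^2*q^2))
     ((x^2*p^4*e^2) + (y^2*q^4*e^2) + (-x^2*p^4*q^2) + (-y^2*p^2*q^4) + (p^2*q^2*e^2)). }
  replace (((e*(q^2-p^2)*x*y + w*p*q)/m)^2) with ((e*(q^2-p^2)*x*y + w*p*q)^2/m^2) by (field; auto).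
  rewrite E. field. auto.
Qed.

Lemma w_back p q e x y w m : m = p^2*x^2+q^2*y^2 -> m <> 0 -> y^2 - (1 - x^2) = 0 ->
  p*((e*p*x - w*q*y)/m)*y - q*((e*q*y + w*p*x)/m)*x = - ((e*(q^2-p^2)*x*y + w*p*q)/m).
Proof.
  intros Hm0 Hm Hu.
  assert (E: p*(e*p*x - w*q*y)*y - q*(e*q*y + w*p*x)*x = - (e*(q^2-p^2)*x*y + w*p*q))
    by lc1 Hu (-w*p*q).
  replace (p*((e*p*x - w*q*y)/m)*y - q*((e*q*y + w*p*x)/m)*x) with
    ((p*(e*p*x - w*q*y)*y - q*(e*q*y + w*p*x)*x)/m) by (field; auto).
  rewrite E. field. auto.
Qed.

Lemma w_rhoN_pos p q e x y w m : good p q e -> x^2+y^2 = 1 -> m = p^2*x^2+q^2*y^2 ->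
  0 < w -> w^2 = m - e^2 -> 0 < (e*(q^2-p^2)*x*y + w*p*q)/m.
Proof.
  intros G Hu Hm0 Hw0 Hw.
  pose proof (mm_pos _ _ _ _ _ G Hu) as Hm. rewrite <- Hm0 in Hm.
  destruct G as (Hp&Hq&He1&He2).
  apply Rdiv_lt_0_compat; auto.
  set (E := e*(q^2-p^2)*x*y).
  assert (Hpq: 0 < w*p*q) by (apply Rmult_lt_0_compat; [apply Rmult_lt_0_compat|]; lra).
  destruct (Rle_lt_dec 0 E). lra.
  assert (Hk: (q^2-p^2)^2*x^2*y^2 = m*(q^2*x^2+p^2*y^2) - p^2*q^2).
  { assert (Hu': y^2 - (1-x^2) = 0) by lra. subst m.
    lc1 Hu' ((-x^2*p^2*q^2) + (-y^2*p^2*q^2) + (-p^2*q^2)). }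
  assert (Hb: e^2*(q^2*x^2+p^2*y^2) < p^2*q^2).
  { assert (e^2 < p^2) by nra. assert (e^2 < q^2) by nra.
    assert (0 <= x^2) by nra. assert (0 <= y^2) by nra.
    assert (p^2*q^2 = p^2*q^2*x^2 + p^2*q^2*y^2) by (rewrite <- Rmult_plus_distr_l, Hu; ring).
    assert (0 < p^2*q^2) by (apply Rmult_lt_0_compat; nra).
    destruct (Rle_lt_dec (x^2) 0).
    - assert (Hx0: x^2 = 0) by lra. assert (Hy1: y^2 = 1) by lra.
      replace (q^2*x^2+p^2*y^2) with (p^2) by (rewrite Hx0, Hy1; ring).
      rewrite (Rmult_comm (p^2)). apply Rmult_lt_compat_r; nra.
    - assert (0 < q^2) by nra. assert (0 < p^2) by nra.
      assert (e^2*q^2*x^2 < p^2*q^2*x^2).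
      { apply Rmult_lt_compat_r; auto. }
      assert (e^2*p^2*y^2 <= q^2*p^2*y^2).
      { apply Rmult_le_compat_r; auto. apply Rmult_le_compat_r; lra. }
      nra. }
  assert (HE2: E^2 < (w*p*q)^2).
  { replace (E^2) with (e^2*((q^2-p^2)^2*x^2*y^2)) by (unfold E; ring).
    replace ((w*p*q)^2) with (w^2*(p^2*q^2)) by ring.
    rewrite Hk, Hw. nra. }
  nra.
Qed.

Lemma w_fwd p q e x y w m : good p q e -> x^2+y^2 = 1 -> m = p^2*x^2+q^2*y^2 ->
  0 < w -> w^2 = m - e^2 ->
  0 < x*((e*q*y + w*p*x)/m) - y*((e*p*x - w*q*y)/m).
Proof.
  intros G Hu Hm0 Hw0 Hw.
  pose proof (mm_pos _ _ _ _ _ G Hu) as Hm. rewrite <- Hm0 in Hm.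
  pose proof (lin_pos _ _ _ _ _ G Hu) as HL.
  destruct G as (Hp&Hq&He1&He2).
  replace (x*((e*q*y + w*p*x)/m) - y*((e*p*x - w*q*y)/m)) with
    ((e*(q-p)*x*y + w*(p*x^2+q*y^2))/m) by (field; lra).
  apply Rdiv_lt_0_compat; auto.
  assert (Hk: (q-p)^2*x^2*y^2 = m - (p*x^2+q*y^2)^2).
  { assert (Hu': y^2 - (1-x^2) = 0) by lra. subst m.
    lc1 Hu' ((y^2*q^2) + (x^2*p^2)). }
  set (E := e*(q-p)*x*y). set (L := p*x^2+q*y^2) in *.
  assert (HL0: 0 < L).
  { assert (0 <= L). { unfold L. assert (0<=x^2) by nra. assert (0 <= y^2) by nra.
      assert (0 <= p*x^2) by (apply Rmult_le_pos; lra).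
      assert (0 <= q*y^2) by (apply Rmult_le_pos; lra). lra. }
    destruct (Rle_lt_dec L 0); [|lra]. assert (L = 0) by lra. rewrite H0 in HL. nra. }
  destruct (Rle_lt_dec 0 E). nra.
  assert (HE2: E^2 < (w*L)^2).
  { replace (E^2) with (e^2*((q-p)^2*x^2*y^2)) by (unfold E; ring).
    replace ((w*L)^2) with (w^2*L^2) by ring.
    rewrite Hk, Hw. nra. }
  assert (0 < w*L) by (apply Rmult_lt_0_compat; auto).
  destruct (Rle_lt_dec (E + w*L) 0); [|lra].
  assert ((w*L)^2 <= E^2) by nra. lra.
Qed.


Definition unitv (X:pt) := fst X ^ 2 + snd X ^ 2 = 1.
Definition mmv p q (X:pt) := p^2*fst X^2+q^2*snd X^2.
Definition rho p q e (X:pt) := sqrt (p^2*fst X^2 + q^2*snd X^2 - e^2).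
Definition Nv p q e (X:pt) : pt :=
  ((e*p*fst X - rho p q e X*q*snd X)/mmv p q X, (e*q*snd X + rho p q e X*p*fst X)/mmv p q X).
Definition Pv p q e (X:pt) : pt :=
  ((e*p*fst X + rho p q e X*q*snd X)/mmv p q X, (e*q*snd X - rho p q e X*p*fst X)/mmv p q X).
Definition Frel p q e (X Y:pt) := p*fst X*fst Y + q*snd X*snd Y = e.
Definition Rf (X:pt) : pt := (fst X, - snd X).


Lemma rho_sq p q e X : good p q e -> unitv X -> rho p q e X ^2 = p^2*fst X^2 + q^2*snd X^2 - e^2.
Proof.
  intros G U. unfold rho. rewrite <- Rsqr_pow2. apply Rsqr_sqrt.
  pose proof (mm_gt _ _ _ _ _ G U). lra.
Qed.

Lemma rho_pos p q e X : good p q e -> unitv X -> 0 < rho p q e X.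
Proof.
  intros G U. unfold rho. apply sqrt_lt_R0.
  pose proof (mm_gt _ _ _ _ _ G U). lra.
Qed.

Lemma mmv_pos p q e X : good p q e -> unitv X -> 0 < mmv p q X.
Proof. intros G U. unfold mmv. exact (mm_pos _ _ _ _ _ G U). Qed.

Ltac prep G U :=
  let Hw := fresh "Hw" in let Hw0 := fresh "Hw0" in let Hm := fresh "Hm" in
  pose proof (rho_sq _ _ _ _ G U) as Hw;
  pose proof (rho_pos _ _ _ _ G U) as Hw0;
  pose proof (mmv_pos _ _ _ _ G U) as Hm.

Lemma Nv_unit p q e X : good p q e -> unitv X -> unitv (Nv p q e X).
Proof.
  intros G U. prep G U. unfold unitv, Nv; cbn [fst snd].
  apply w_unit; unfold mmv in *; auto; lra.
Qed.

Lemma Nv_rel p q e X : good p q e -> unitv X -> Frel p q e X (Nv p q e X).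
Proof.
  intros G U. prep G U. unfold Frel, Nv; cbn [fst snd].
  apply w_rel; unfold mmv in *; auto; lra.
Qed.

Lemma Nv_cross p q e X : good p q e -> unitv X ->
  p*fst X*snd (Nv p q e X) - q*snd X*fst (Nv p q e X) = rho p q e X.
Proof.
  intros G U. prep G U. unfold Nv; cbn [fst snd].
  apply w_cross; unfold mmv in *; auto; lra.
Qed.

Lemma rho_Nv p q e X : good p q e -> unitv X ->
  rho p q e (Nv p q e X) = (e*(q^2-p^2)*fst X*snd X + rho p q e X*p*q)/mmv p q X.
Proof.
  intros G U. prep G U.
  assert (P: 0 < (e*(q^2-p^2)*fst X*snd X + rho p q e X*p*q)/mmv p q X).
  { apply w_rhoN_pos; auto. }
  pose proof (Nv_unit _ _ _ _ G U) as U'.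
  pose proof (rho_sq _ _ _ _ G U') as Hw'.
  pose proof (rho_pos _ _ _ _ G U') as Hw0'.
  assert (E: ((e*(q^2-p^2)*fst X*snd X + rho p q e X*p*q)/mmv p q X)^2 = rho p q e (Nv p q e X)^2).
  { rewrite Hw'. unfold Nv; cbn [fst snd]. apply w_rhoN_sq; unfold mmv in *; auto; try lra.
    unfold unitv in U; lra. }
  apply Rsqr_inj; try lra. rewrite !Rsqr_pow2. auto.
Qed.

Lemma Nv_back p q e X : good p q e -> unitv X ->
  p*fst (Nv p q e X)*snd X - q*snd (Nv p q e X)*fst X = - rho p q e (Nv p q e X).
Proof.
  intros G U. rewrite rho_Nv; auto. prep G U. unfold Nv; cbn [fst snd].
  apply w_back; unfold mmv in *; auto; try lra. unfold unitv in U; lra.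
Qed.

Lemma Nv_fwd p q e X : good p q e -> unitv X ->
  0 < fst X*snd (Nv p q e X) - snd X*fst (Nv p q e X).
Proof.
  intros G U. prep G U. unfold Nv; cbn [fst snd].
  apply w_fwd; unfold mmv in *; auto.
Qed.

Lemma two_sol p q e X Y : good p q e -> unitv X -> unitv Y -> Frel p q e X Y ->
  Y = Nv p q e X \/ Y = Pv p q e X.
Proof.
  intros G U V F. prep G U. destruct X as [x y]. destruct Y as [y1 y2].
  unfold unitv, Frel, Nv, Pv, mmv in *; cbn [fst snd] in *.
  set (w := rho p q e (x,y)) in *.
  set (t := p*x*y2 - q*y*y1).
  assert (E1: (p^2*x^2+q^2*y^2)*y1 = e*p*x - t*q*y) by (unfold t; rewrite <- F; ring).
  assert (E2: (p^2*x^2+q^2*y^2)*y2 = e*q*y + t*p*x) by (unfold t; rewrite <- F; ring).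
  assert (Et: t^2 = w^2).
  { rewrite Hw. rewrite <- F. unfold t.
    replace ((p*x*y2 - q*y*y1)^2) with ((p^2*x^2+q^2*y^2)*(y1^2+y2^2) - (p*x*y1+q*y*y2)^2) by ring.
    rewrite V. ring. }
  assert (Ht: t = w \/ t = - w).
  { assert ((t - w)*(t + w) = 0) by (replace ((t-w)*(t+w)) with (t^2 - w^2) by ring; lra).
    apply Rmult_integral in H. lra. }
  destruct Ht as [Ht|Ht]; [left|right]; f_equal;
   apply (Rmult_eq_reg_l (p^2*x^2+q^2*y^2)); try lra;
   [rewrite E1 | rewrite E2 | rewrite E1 | rewrite E2]; rewrite Ht; field; lra.
Qed.

Lemma Frel_sym p q e X Y : Frel p q e X Y -> Frel p q e Y X.
Proof. unfold Frel. intros H. rewrite <- H. ring. Qed.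

Lemma Pv_Nv p q e X : good p q e -> unitv X -> Pv p q e (Nv p q e X) = X.
Proof.
  intros G U. pose proof (Nv_unit _ _ _ _ G U) as U'.
  destruct (two_sol p q e (Nv p q e X) X G U' U (Frel_sym _ _ _ _ _ (Nv_rel _ _ _ _ G U))) as [H|H];
  auto.
  exfalso. pose proof (Nv_cross _ _ _ _ G U') as C. rewrite <- H in C.
  pose proof (Nv_back _ _ _ _ G U) as B.
  pose proof (rho_pos _ _ _ _ G U'). lra.
Qed.

Lemma rho_Rf p q e X : rho p q e (Rf X) = rho p q e X.
Proof. unfold rho, Rf; cbn [fst snd]. f_equal. ring. Qed.

Lemma Nv_Rf p q e X : Nv p q e (Rf X) = Rf (Pv p q e X).
Proof.
  unfold Nv, Pv, mmv. rewrite rho_Rf. unfold Rf; cbn [fst snd].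
  replace ((- snd X)^2) with (snd X ^2) by ring.
  f_equal; unfold Rdiv; ring.
Qed.

Lemma Pv_Rf p q e X : Pv p q e (Rf X) = Rf (Nv p q e X).
Proof.
  unfold Nv, Pv, mmv. rewrite rho_Rf. unfold Rf; cbn [fst snd].
  replace ((- snd X)^2) with (snd X ^2) by ring.
  f_equal; unfold Rdiv; ring.
Qed.

Lemma Rf_Rf X : Rf (Rf X) = X.
Proof. destruct X; unfold Rf; cbn [fst snd]. f_equal. ring. Qed.

Lemma unitv_Rf X : unitv X -> unitv (Rf X).
Proof. unfold unitv, Rf; cbn [fst snd]. intros H; rewrite <- H; ring. Qed.

Lemma Nv_Pv p q e X : good p q e -> unitv X -> Nv p q e (Pv p q e X) = X.
Proof.
  intros G U.
  assert (E: Pv p q e X = Rf (Nv p q e (Rf X))).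
  { rewrite <- Pv_Rf, Rf_Rf. auto. }
  rewrite E, Nv_Rf, Pv_Nv, Rf_Rf; auto. apply unitv_Rf; auto.
Qed.

Lemma Nv_ne_Pv p q e X : good p q e -> unitv X -> Nv p q e X <> Pv p q e X.
Proof.
  intros G U H. prep G U.
  assert (H1: fst (Nv p q e X) = fst (Pv p q e X)) by (rewrite H; auto).
  assert (H2: snd (Nv p q e X) = snd (Pv p q e X)) by (rewrite H; auto).
  unfold Nv, Pv in H1, H2; cbn [fst snd] in H1, H2.
  destruct G as (Hp&Hq&_).
  assert (A1: rho p q e X * q * snd X = 0).
  { apply (Rmult_eq_reg_r (/ mmv p q X)) in H1. 2: apply Rinv_neq_0_compat; lra.
    unfold Rdiv in H1. lra. }
  assert (A2: rho p q e X * p * fst X = 0).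
  { apply (Rmult_eq_reg_r (/ mmv p q X)) in H2. 2: apply Rinv_neq_0_compat; lra.
    unfold Rdiv in H2. lra. }
  apply Rmult_integral in A1. apply Rmult_integral in A2.
  destruct A1 as [A1|A1]; [apply Rmult_integral in A1; destruct A1; lra|].
  destruct A2 as [A2|A2]; [apply Rmult_integral in A2; destruct A2; lra|].
  unfold unitv in U. rewrite A1, A2 in U. lra.
Qed.


Definition cs (t:R) : pt := (cos t, sin t).
Definition Tf p q e t :=
  let n := Nv p q e (cs t) in
  (cos t * snd n - sin t * fst n) / (1 + (cos t * fst n + sin t * snd n)).
Definition Nf p q e t := t + 2 * atan (Tf p q e t).

Lemma cs_unit t : unitv (cs t).
Proof. unfold unitv, cs; cbn [fst snd]. rewrite <- (sin2_cos2 t). unfold Rsqr. ring. Qed.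

Lemma half_angle (T dt cr : R) : dt^2 + cr^2 = 1 -> 0 < 1 + dt -> T = cr/(1+dt) ->
  cos (2*atan T) = dt /\ sin (2*atan T) = cr.
Proof.
  intros H1 H2 HT.
  assert (HS: 0 < 1 + T^2) by nra.
  assert (Hs: sqrt (1+T²) ^2 = 1 + T^2).
  { rewrite <- Rsqr_pow2. rewrite Rsqr_sqrt. unfold Rsqr; ring. unfold Rsqr; nra. }
  assert (Hs0: sqrt (1+T²) <> 0). { apply Rgt_not_eq. apply sqrt_lt_R0. unfold Rsqr; nra. }
  rewrite cos_2a, sin_2a, cos_atan, sin_atan.
  assert (Ec: 1 / sqrt (1 + T²) * (1 / sqrt (1 + T²)) - T / sqrt (1 + T²) * (T / sqrt (1 + T²))
     = (1 - T^2)/(sqrt (1+T²))^2) by (field; auto).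
  assert (Es: 2 * (T / sqrt (1 + T²)) * (1 / sqrt (1 + T²)) = 2*T/(sqrt (1+T²))^2) by (field; auto).
  rewrite Ec, Es, Hs. subst T. split.
  - replace ((1 - (cr / (1 + dt)) ^ 2) / (1 + (cr / (1 + dt)) ^ 2)) with
      (((1+dt)^2 - cr^2)/((1+dt)^2 + cr^2)) by (field; split; nra).
    replace ((1+dt)^2 + cr^2) with (2*(1+dt)) by nra.
    replace ((1 + dt) ^ 2 - cr ^ 2) with (2*dt*(1+dt)) by nra. field. lra.
  - replace (2 * (cr / (1 + dt)) / (1 + (cr / (1 + dt)) ^ 2)) with
      (2*cr*(1+dt)/((1+dt)^2 + cr^2)) by (field; split; nra).
    replace ((1+dt)^2 + cr^2) with (2*(1+dt)) by nra. field. lra.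
Qed.

Lemma dot_cross_pos (X Y : pt) : unitv X -> unitv Y -> 0 < fst X * snd Y - snd X * fst Y ->
  0 < 1 + (fst X * fst Y + snd X * snd Y) /\
  (fst X * fst Y + snd X * snd Y)^2 + (fst X * snd Y - snd X * fst Y)^2 = 1.
Proof.
  unfold unitv. intros U V C.
  assert (E: (fst X * fst Y + snd X * snd Y)^2 + (fst X * snd Y - snd X * fst Y)^2 = 1).
  { replace 1 with ((fst X^2+snd X^2)*(fst Y^2+snd Y^2)) by (rewrite U, V; ring). ring. }
  split; auto. nra.
Qed.

Lemma Nf_cs p q e t : good p q e -> cs (Nf p q e t) = Nv p q e (cs t).
Proof.
  intros G. pose proof (cs_unit t) as U.
  pose proof (Nv_unit _ _ _ _ G U) as V. pose proof (Nv_fwd _ _ _ _ G U) as F.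
  destruct (dot_cross_pos _ _ U V F) as [D1 D2].
  set (n := Nv p q e (cs t)) in *.
  destruct (half_angle (Tf p q e t) _ _ D2 D1) as [Hc Hs].
  { unfold Tf. fold n. unfold cs; cbn [fst snd]. reflexivity. }
  unfold Nf, cs. rewrite cos_plus, sin_plus, Hc, Hs.
  unfold cs in *; cbn [fst snd] in *. destruct n as [n1 n2]. cbn [fst snd] in *.
  unfold unitv in U, V; cbn [fst snd] in U, V.
  f_equal.
  - replace n1 with (n1 * (cos t^2 + sin t^2)) at 3 by (rewrite U; ring). ring.
  - replace n2 with (n2 * (cos t^2 + sin t^2)) at 3 by (rewrite U; ring). ring.
Qed.

From Coquelicot Require Import Coquelicot.
Open Scope R_scope.

Definition Tr p q e (r : R -> R) t :=
  let m := p^2*cos t^2 + q^2*sin t^2 in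
  let n1 := (e*p*cos t - r t*q*sin t)/m in
  let n2 := (e*q*sin t + r t*p*cos t)/m in
  (cos t * n2 - sin t * n1) / (1 + (cos t * n1 + sin t * n2)).

Lemma Tr_ex p q e r t : ex_derive r t -> p^2*cos t^2 + q^2*sin t^2 <> 0 ->
  1 + (cos t * ((e*p*cos t - r t*q*sin t)/(p^2*cos t^2 + q^2*sin t^2)) +
       sin t * ((e*q*sin t + r t*p*cos t)/(p^2*cos t^2 + q^2*sin t^2))) <> 0 ->
  ex_derive (fun t => t + 2 * atan (Tr p q e r t)) t.
Proof.
  intros Hr Hm Hd. unfold Tr. auto_derive.
  replace (p * (p * 1) * (cos t * (cos t * 1)) + q * (q * 1) * (sin t * (sin t * 1)))
    with (p^2*cos t^2 + q^2*sin t^2) by ring.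
  repeat split; try exact Hr; try exact Hm.
  intro Hx; apply Hd; rewrite <- Hx; unfold Rdiv; ring.
Qed.

Definition rA p q e t := rho p q e (cs t).

Lemma rA_pos p q e t : good p q e -> 0 < rA p q e t.
Proof. intros G. apply rho_pos; auto. apply cs_unit. Qed.

Lemma rA_sq p q e t : good p q e -> rA p q e t ^ 2 = p^2*cos t^2 + q^2*sin t^2 - e^2.
Proof. intros G. unfold rA. rewrite rho_sq; auto. apply cs_unit. Qed.

Lemma rA_der p q e t : good p q e ->
  is_derive (rA p q e) t ((q^2-p^2)*sin t*cos t / rA p q e t).
Proof.
  intros G. pose proof (rA_pos p q e t G) as H0.
  pose proof (mm_gt _ _ _ _ _ G (cs_unit t)) as H1. unfold cs in H1; cbn [fst snd] in H1.
  unfold rA, rho, cs in *; cbn [fst snd] in *.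
  auto_derive.
  - replace (p * (p * 1) * (cos t * (cos t * 1)) + q * (q * 1) * (sin t * (sin t * 1)) + - (e * (e * 1)))
      with (p^2*cos t^2 + q^2*sin t^2 - e^2) by ring. lra.
  - replace (p * (p * 1) * (cos t * (cos t * 1)) + q * (q * 1) * (sin t * (sin t * 1)) + - (e * (e * 1)))
      with (p^2*cos t^2 + q^2*sin t^2 - e^2) by ring. field. lra.
Qed.

Lemma rA_ex p q e t : good p q e -> ex_derive (rA p q e) t.
Proof. intros G. eexists. apply rA_der; auto. Qed.

Lemma Nf_eq p q e : Nf p q e = fun t => t + 2 * atan (Tr p q e (rA p q e) t).
Proof. reflexivity. Qed.

Lemma Nf_ex p q e t : good p q e -> ex_derive (Nf p q e) t.
Proof.
  intros G. rewrite Nf_eq. apply Tr_ex.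
  - apply rA_ex; auto.
  - pose proof (mm_pos _ _ _ _ _ G (cs_unit t)). unfold cs in H; cbn [fst snd] in H. lra.
  - pose proof (cs_unit t) as U.
    pose proof (Nv_unit _ _ _ _ G U) as V. pose proof (Nv_fwd _ _ _ _ G U) as F.
    destruct (dot_cross_pos _ _ U V F) as [D1 D2].
    unfold Nv, mmv, cs in D1; cbn [fst snd] in D1. unfold rA, cs. lra.
Qed.

Lemma Nf_rel p q e t : good p q e ->
  p*cos t*cos (Nf p q e t) + q*sin t*sin (Nf p q e t) = e.
Proof.
  intros G. pose proof (Nv_rel _ _ _ _ G (cs_unit t)) as R.
  rewrite <- Nf_cs in R by auto. unfold Frel, cs in R; cbn [fst snd] in R. exact R.
Qed.

Lemma Nf_der p q e t : good p q e ->
  is_derive (Nf p q e) t (rA p q e (Nf p q e t) / rA p q e t).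
Proof.
  intros G.
  pose proof (Derive_correct _ _ (Nf_ex p q e t G)) as D.
  set (d := Derive (Nf p q e) t) in *.
  assert (H1: is_derive (fun t => p*cos t*cos (Nf p q e t) + q*sin t*sin (Nf p q e t)) t
     ((-p*sin t*cos (Nf p q e t) + q*cos t*sin (Nf p q e t))
       + d*(-p*cos t*sin (Nf p q e t) + q*sin t*cos (Nf p q e t)))).
  { auto_derive.
    - split; [|split; auto]; exists d; exact D.
    - change (Derive (fun x : R => Nf p q e x) t) with d. ring. }
  assert (H2: is_derive (fun t => p*cos t*cos (Nf p q e t) + q*sin t*sin (Nf p q e t)) t 0).
  { apply is_derive_ext with (f := fun _ => e).
    - intros; rewrite Nf_rel; auto.
    - exact (@is_derive_const R_AbsRing R_NormedModule e t). }
  pose proof (is_derive_unique _ _ _ H1) as E1. rewrite (is_derive_unique _ _ _ H2) in E1.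
  pose proof (cs_unit t) as U.
  pose proof (Nv_cross _ _ _ _ G U) as C. pose proof (Nv_back _ _ _ _ G U) as B.
  rewrite <- Nf_cs in C, B; auto.
  unfold cs in C, B; cbn [fst snd] in C, B.
  pose proof (rA_pos p q e t G) as P.
  replace (rA p q e (Nf p q e t) / rA p q e t) with d. exact D.
  unfold rA. rewrite Nf_cs; auto. fold (rA p q e t).
  rewrite <- Nf_cs; auto. unfold rA in P.
  apply (Rmult_eq_reg_r (rho p q e (cs t))); [|lra].
  unfold Rdiv. rewrite Rmult_assoc, Rinv_l; [|lra]. unfold cs in *; cbn [fst snd] in *.
  set (N := Nf p q e t) in *.
  replace (- p * cos t * sin N + q * sin t * cos N) with (- (p * cos t * sin N - q * sin t * cos N)) in E1 by ring.
  replace (- p * sin t * cos N + q * cos t * sin N) with (- (p * cos N * sin t - q * sin N * cos t)) in E1 by ring.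
  rewrite C, B in E1. lra.
Qed.


Ltac lc4 H1 H2 H3 H4 c1 c2 c3 c4 :=
  match type of H1 with ?e1 = 0 => match type of H2 with ?e2 = 0 =>
  match type of H3 with ?e3 = 0 => match type of H4 with ?e4 = 0 =>
  apply Rminus_diag_uniq; transitivity (c1*e1+c2*e2+c3*e3+c4*e4);
  [ring | rewrite H1, H2, H3, H4; ring] end end end end.

Lemma d_comp (f g : R -> R) x df dg : is_derive f (g x) df -> is_derive g x dg ->
  is_derive (fun t => f (g t)) x (dg * df).
Proof. intros. exact (is_derive_comp f g x df dg H H0). Qed.
Lemma d_plus (f g : R -> R) x df dg : is_derive f x df -> is_derive g x dg ->
  is_derive (fun t => f t + g t) x (df + dg).
Proof. intros. exact (is_derive_plus f g x df dg H H0). Qed.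
Lemma d_minus (f g : R -> R) x df dg : is_derive f x df -> is_derive g x dg ->
  is_derive (fun t => f t - g t) x (df - dg).
Proof. intros. exact (is_derive_minus f g x df dg H H0). Qed.
Lemma d_val (f : R -> R) (x l l' : R) : is_derive f x l -> @eq R l l' -> is_derive f x l'.
Proof. intros H ->; auto. Qed.

Fixpoint Niter p q e (j : nat) (t : R) : R :=
  match j with O => t | S j => Nf p q e (Niter p q e j t) end.

Lemma Niter_add p q e m j t : Niter p q e (m + j) t = Niter p q e m (Niter p q e j t).
Proof. induction m; simpl; auto. rewrite IHm; auto. Qed.

Lemma Niter_der p q e j t : good p q e ->
  is_derive (Niter p q e j) t (rA p q e (Niter p q e j t) / rA p q e t).
Proof.
  intros G. pose proof (rA_pos p q e t G).
  induction j; simpl.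
  - apply d_val with 1. exact (@is_derive_id R_AbsRing t). field. lra.
  - apply d_val with (rA p q e (Niter p q e j t) / rA p q e t *
                      (rA p q e (Nf p q e (Niter p q e j t)) / rA p q e (Niter p q e j t))).
    + apply (d_comp (Nf p q e) (Niter p q e j)); auto. apply Nf_der; auto.
    + pose proof (rA_pos p q e (Niter p q e j t) G). field. lra.
Qed.

Definition Iv p q e a b := sin (b - a) / (rA p q e a + rA p q e b).

Lemma flow p q e (A B : R -> R) t w : good p q e ->
  is_derive A t (rA p q e (A t) * w) -> is_derive B t (rA p q e (B t) * w) ->
  is_derive (fun t => Iv p q e (A t) (B t)) t 0.
Proof.
  intros G HA HB. unfold Iv.
  pose proof (rA_pos p q e (A t) G) as PA. pose proof (rA_pos p q e (B t) G) as PB.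
  eapply d_val.
  - apply is_derive_div.
    + apply (d_comp sin (fun t => B t - A t)). apply is_derive_sin. apply d_minus; eauto.
    + apply d_plus; apply (d_comp (rA p q e)); eauto; apply rA_der; auto.
    + lra.
  - pose proof (rA_sq p q e (A t) G) as SA. pose proof (rA_sq p q e (B t) G) as SB.
    pose proof (sin2_cos2 (A t)) as TA. pose proof (sin2_cos2 (B t)) as TB.
    unfold Rsqr in TA, TB.
    set (a := A t) in *. set (b := B t) in *.
    set (ra := rA p q e a) in *. set (rb := rA p q e b) in *.
    rewrite cos_minus, sin_minus.
    change (A t) with a; change (B t) with b. fold ra rb.
    replace (ra * w * ((q^2-p^2)*sin a*cos a/ra)) with (w*((q^2-p^2)*sin a*cos a)) by (field; lra).
    replace (rb * w * ((q^2-p^2)*sin b*cos b/rb)) with (w*((q^2-p^2)*sin b*cos b)) by (field; lra).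
    assert (H1: ra^2 - (p^2*cos a^2+q^2*sin a^2-e^2) = 0) by lra.
    assert (H2: rb^2 - (p^2*cos b^2+q^2*sin b^2-e^2) = 0) by lra.
    assert (H3: sin a^2 - (1 - cos a^2) = 0) by (simpl; lra).
    assert (H4: sin b^2 - (1 - cos b^2) = 0) by (simpl; lra).
    set (sa := sin a) in *. set (ca := cos a) in *. set (sb := sin b) in *. set (cb := cos b) in *.
    assert (Num: (rb * w - ra * w) * (cb * ca + sb * sa) * (ra + rb) -
      (sb * ca - cb * sa) * (w * ((q ^ 2 - p ^ 2) * sa * ca) + w * ((q ^ 2 - p ^ 2) * sb * cb)) = 0).
    { lc4 H1 H2 H3 H4 ((-ca*cb*w) + (-sa*sb*w)) ((ca*cb*w) + (sa*sb*w))
        ((-ca*cb*w*p^2) + (-sa*sb*w*q^2)) ((ca*cb*w*p^2) + (sa*sb*w*q^2)). }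
    rewrite Num. unfold Rdiv. ring.
Qed.


Fixpoint sumf (n : nat) (F : nat -> R) : R :=
  match n with O => 0 | S n => F O + sumf n (fun j => F (S j)) end.

Lemma sumf_ext n F G : (forall j, F j = G j) -> sumf n F = sumf n G.
Proof.
  revert F G; induction n; intros F G H; simpl; auto.
  rewrite H. f_equal. apply IHn. intros; apply H.
Qed.

Lemma sumf_minus n F G : sumf n (fun j => F j - G j) = sumf n F - sumf n G.
Proof. revert F G; induction n; intros; simpl. ring. rewrite IHn. ring. Qed.

Lemma sumf_scal n c F : sumf n (fun j => c * F j) = c * sumf n F.
Proof. revert F; induction n; intros; simpl. ring. rewrite IHn. ring. Qed.

Lemma sumf_shift n F : sumf n (fun j => F (S j)) = sumf n F - F O + F n.
Proof.
  revert F; induction n; intros; simpl. ring.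
  rewrite (IHn (fun j => F (S j))). ring.
Qed.

Lemma telescope n k (g : nat -> R) : (forall j, g (n + j)%nat = g j) ->
  sumf n (fun j => g (k + j)%nat) = sumf n g.
Proof.
  revert g; induction k; intros g Hg; simpl. auto.
  rewrite (IHk (fun i => g (S i))).
  - rewrite sumf_shift. rewrite <- (Hg O). rewrite Nat.add_0_r. ring.
  - intros j. replace (S (n + j)) with (n + S j)%nat by lia. apply Hg.
Qed.

Lemma sumf_der n (F : nat -> R -> R) dF x : (forall j, is_derive (F j) x (dF j)) ->
  is_derive (fun t => sumf n (fun j => F j t)) x (sumf n dF).
Proof.
  revert F dF; induction n; intros F dF H; simpl.
  - exact (@is_derive_const R_AbsRing R_NormedModule 0 x).
  - apply d_plus; [auto|]. apply (IHn (fun j => F (S j)) (fun j => dF (S j))). auto.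
Qed.

Lemma const_der (f : R -> R) : (forall x, is_derive f x 0) -> forall a b, f a = f b.
Proof.
  intros H a b.
  destruct (MVT_abs f (fun _ => 0) a b) as [c [Hc _]].
  { intros c _. apply is_derive_Reals. apply H. }
  rewrite Rabs_R0, Rmult_0_l in Hc.
  assert (f b - f a = 0) by (apply Rabs_eq_0; auto). lra.
Qed.


Lemma Iv_const p q e k : good p q e -> forall a b,
  Iv p q e a (Niter p q e k a) = Iv p q e b (Niter p q e k b).
Proof.
  intros G. apply (const_der (fun t => Iv p q e t (Niter p q e k t))).
  intros x. apply (flow p q e (fun t => t) (Niter p q e k) x (/ rA p q e x)); auto.
  - pose proof (rA_pos p q e x G). apply d_val with 1. exact (@is_derive_id R_AbsRing x).
    field. lra.
  - pose proof (rA_pos p q e x G). eapply d_val. apply Niter_der; auto. field. lra.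
Qed.

Lemma Iv_zero p q e a b : good p q e -> Iv p q e a b = 0 -> sin (b - a) = 0.
Proof.
  intros G H. unfold Iv in H. pose proof (rA_pos p q e a G). pose proof (rA_pos p q e b G).
  apply (Rmult_eq_compat_r (rA p q e a + rA p q e b)) in H.
  unfold Rdiv in H. rewrite Rmult_assoc, Rinv_l in H; lra.
Qed.

Lemma porism p q e n tu : good p q e -> cs (Niter p q e n tu) = cs tu ->
  forall t, sin (Niter p q e n t - t) = 0.
Proof.
  intros G Hc t. apply (Iv_zero p q e); auto.
  rewrite (Iv_const p q e n G t tu).
  unfold Iv. unfold cs in Hc. injection Hc as H1 H2.
  rewrite sin_minus, H1, H2. unfold Rdiv. ring.
Qed.

Lemma sin_sq_eq y z : sin (y - z) = 0 -> sin y ^ 2 = sin z ^ 2.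
Proof.
  intros H. replace y with (z + (y - z)) by ring. rewrite sin_plus, H.
  pose proof (sin2_cos2 (y - z)). rewrite H in H0. unfold Rsqr in H0.
  replace (sin z * cos (y - z) + cos z * 0) with (sin z * cos (y - z)) by ring.
  replace ((sin z * cos (y - z))^2) with (sin z ^2 * (cos (y-z) * cos (y-z))) by ring.
  replace (cos (y-z) * cos (y-z)) with 1 by lra. ring.
Qed.

Definition Sf p q e n k t := sumf n (fun j => cos (Niter p q e (k + j) t - Niter p q e j t)).

Lemma core p q e n k tu : good p q e -> cs (Niter p q e n tu) = cs tu ->
  forall a b, Sf p q e n k a = Sf p q e n k b.
Proof.
  intros G Hc. apply const_der. intros x. unfold Sf.
  pose proof (rA_pos p q e x G) as Px.
  set (A := fun j t => Niter p q e j t). set (B := fun j t => Niter p q e (k + j) t).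
  eapply d_val.
  - apply (sumf_der n (fun j t => cos (B j t - A j t))
      (fun j => (rA p q e (B j x) / rA p q e x - rA p q e (A j x) / rA p q e x) * - sin (B j x - A j x))).
    intros j. apply (d_comp cos (fun t => B j t - A j t)). apply is_derive_cos.
    apply d_minus; apply Niter_der; auto.
  - set (L0 := Iv p q e x (Niter p q e k x)).
    set (g := fun j => sin (Niter p q e j x) ^ 2).
    transitivity (sumf n (fun j => (- L0 * (q^2-p^2) / rA p q e x) * (g (k + j)%nat - g j))).
    + apply sumf_ext. intros j.
      assert (HL: Iv p q e (A j x) (B j x) = L0).
      { unfold A, B, L0. rewrite Niter_add. apply Iv_const; auto. }
      unfold Iv in HL.
      pose proof (rA_pos p q e (A j x) G). pose proof (rA_pos p q e (B j x) G).
      assert (Hs: sin (B j x - A j x) = L0 * (rA p q e (A j x) + rA p q e (B j x))).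
      { rewrite <- HL. field. lra. }
      rewrite Hs. unfold g. fold (A j x). fold (B j x).
      pose proof (rA_sq p q e (A j x) G). pose proof (rA_sq p q e (B j x) G).
      pose proof (sin2_cos2 (A j x)). pose proof (sin2_cos2 (B j x)). unfold Rsqr in *.
      apply Rmult_eq_reg_r with (rA p q e x); [|lra].
      field_simplify; try lra.
      rewrite H1, H2.
      replace (cos (A j x) ^2) with (1 - sin (A j x)^2) by (simpl; lra).
      replace (cos (B j x) ^2) with (1 - sin (B j x)^2) by (simpl; lra).
      ring.
    + rewrite sumf_scal. rewrite (sumf_minus n (fun j => g (k+j)%nat) g).
      rewrite telescope. ring.
      intros j. unfold g. rewrite Niter_add. apply sin_sq_eq.
      apply (porism p q e n tu); auto.
Qed.


Definition Ef a b r x1 x2 y1 y2 t :=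
  (r*x1 + t*(r*(y1-x1)))^2/a^2 + (r*x2 + t*(r*(y2-x2)))^2/b^2 - 1.

Lemma tang_alg a b r x1 x2 y1 y2 t0 : 0 < a -> 0 < b -> 0 < r ->
  x1^2 + x2^2 = 1 -> y1^2 + y2^2 = 1 -> (x1 <> y1 \/ x2 <> y2) ->
  Ef a b r x1 x2 y1 y2 t0 = 0 -> (forall t, Ef a b r x1 x2 y1 y2 t = 0 -> t = t0) ->
  (r^2-a^2+b^2)*x1*y1 + (r^2+a^2-b^2)*x2*y2 = a^2+b^2-r^2.
Proof.
  intros Ha Hb Hr U V Hne E0 Uq.
  assert (HD: 0 < (y1-x1)^2 + (y2-x2)^2).
  { pose proof (pow2_ge_0 (y1-x1)); pose proof (pow2_ge_0 (y2-x2)).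
    destruct Hne as [Hn|Hn].
    - assert (0 < Rsqr (y1-x1)) by (apply Rsqr_pos_lt; lra). unfold Rsqr in *. nra.
    - assert (0 < Rsqr (y2-x2)) by (apply Rsqr_pos_lt; lra). unfold Rsqr in *. nra. }
  set (al := r^2*((y1-x1)^2/a^2 + (y2-x2)^2/b^2)).
  set (be := 2*r^2*(x1*(y1-x1)/a^2 + x2*(y2-x2)/b^2)).
  set (ga := r^2*(x1^2/a^2 + x2^2/b^2) - 1).
  assert (Hal: 0 < al).
  { unfold al. apply Rmult_lt_0_compat. nra.
    assert (0 <= (y1-x1)^2/a^2) by (unfold Rdiv; apply Rmult_le_pos; [apply pow2_ge_0| left; apply Rinv_0_lt_compat; nra]).
    assert (0 <= (y2-x2)^2/b^2) by (unfold Rdiv; apply Rmult_le_pos; [apply pow2_ge_0| left; apply Rinv_0_lt_compat; nra]).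
    destruct (Rle_lt_dec ((y1-x1)^2/a^2 + (y2-x2)^2/b^2) 0); [|lra].
    assert ((y1-x1)^2/a^2 = 0) by lra. assert ((y2-x2)^2/b^2 = 0) by lra.
    assert ((y1-x1)^2 = 0). { apply (Rmult_eq_reg_r (/a^2)). unfold Rdiv in *; lra.
      apply Rinv_neq_0_compat; nra. }
    assert ((y2-x2)^2 = 0). { apply (Rmult_eq_reg_r (/b^2)). unfold Rdiv in *; lra.
      apply Rinv_neq_0_compat; nra. }
    lra. }
  assert (HE: forall t, Ef a b r x1 x2 y1 y2 t = al*t^2 + be*t + ga).
  { intros t. unfold Ef, al, be, ga. field. split; lra. }
  set (t1 := - be/al - t0).
  assert (E1: Ef a b r x1 x2 y1 y2 t1 = 0).
  { rewrite HE. rewrite HE in E0. unfold t1.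
    replace (al * (- be / al - t0) ^ 2 + be * (- be / al - t0) + ga) with (al*t0^2 + be*t0 + ga)
      by (field; lra). auto. }
  apply Uq in E1. unfold t1 in E1.
  assert (Hbe: be = -2*al*t0).
  { apply (Rmult_eq_reg_r (/al)). 2: apply Rinv_neq_0_compat; lra.
    replace (be * / al) with (be/al) by (unfold Rdiv; ring).
    replace (-2 * al * t0 * / al) with (-2 * t0) by (field; lra). lra. }
  rewrite HE in E0.
  assert (Hdisc: be^2 - 4*al*ga = 0).
  { assert (ga = - al*t0^2 - be*t0) by lra. rewrite H, Hbe. ring. }
  assert (Hk: b^2*(y1-x1)^2 + a^2*(y2-x2)^2 = r^2*(x1*y2-x2*y1)^2).
  { assert (K: be^2 - 4*al*ga = 4*r^2/(a^2*b^2) *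
       (b^2*(y1-x1)^2 + a^2*(y2-x2)^2 - r^2*(x1*y2-x2*y1)^2)).
    { unfold al, be, ga. field. split; lra. }
    rewrite Hdisc in K.
    assert (0 < 4*r^2/(a^2*b^2)).
    { apply Rdiv_lt_0_compat. nra. apply Rmult_lt_0_compat; nra. }
    assert (b^2*(y1-x1)^2 + a^2*(y2-x2)^2 - r^2*(x1*y2-x2*y1)^2 = 0).
    { apply (Rmult_eq_reg_l (4*r^2/(a^2*b^2))); lra. }
    lra. }
  assert (H1: x2^2 - (1 - x1^2) = 0) by lra.
  assert (H2: y2^2 - (1 - y1^2) = 0) by lra.
  assert (Hc: (1-(x1*y1+x2*y2))*((r^2-a^2+b^2)*x1*y1+(r^2+a^2-b^2)*x2*y2-(a^2+b^2-r^2))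
      - (r^2*(x1*y2-x2*y1)^2 - a^2*(y2-x2)^2 - b^2*(y1-x1)^2) = 0).
  { lc2 H1 H2 ((-y2^2*r^2) + (-y2^2*a^2) + (y2^2*b^2) + (-y1^2*r^2) + (a^2))
      ((-r^2) + (x1^2*a^2) + (b^2) + (-x1^2*b^2)). }
  assert (Hd: 1 - (x1*y1+x2*y2) = ((y1-x1)^2 + (y2-x2)^2)/2).
  { field_simplify. lra. }
  assert (Z: (1-(x1*y1+x2*y2))*((r^2-a^2+b^2)*x1*y1+(r^2+a^2-b^2)*x2*y2-(a^2+b^2-r^2)) = 0) by lra.
  apply Rmult_integral in Z. destruct Z as [Z|Z]; lra.
Qed.


Lemma sq0 x : x^2 = 0 -> x = 0.
Proof. intros; nra. Qed.

Definition loc (O:pt) (r c s : R) (z : pt) : pt :=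
  ((c*(fst z - fst O) + s*(snd z - snd O))/r, (-s*(fst z - fst O) + c*(snd z - snd O))/r).

Lemma loc_dist O r c s z w : 0 < r -> c^2 + s^2 = 1 ->
  dist2 z w = r^2 * ((fst (loc O r c s z) - fst (loc O r c s w))^2 + (snd (loc O r c s z) - snd (loc O r c s w))^2).
Proof.
  intros Hr Hcs. unfold dist2, loc; cbn [fst snd].
  replace (r ^ 2 *
   (((c * (fst z - fst O) + s * (snd z - snd O)) / r - (c * (fst w - fst O) + s * (snd w - snd O)) / r) ^ 2 +
    ((- s * (fst z - fst O) + c * (snd z - snd O)) / r - (- s * (fst w - fst O) + c * (snd w - snd O)) / r) ^ 2))
   with ((c^2+s^2)*((fst z - fst w)^2 + (snd z - snd w)^2)) by (field; lra).
  rewrite Hcs. ring.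
Qed.

Lemma loc_unit O r c s z : 0 < r -> c^2 + s^2 = 1 -> on_circle O r z -> unitv (loc O r c s z).
Proof.
  intros Hr Hcs H. unfold on_circle in H. rewrite (loc_dist O r c s z O Hr Hcs) in H.
  unfold unitv. unfold loc in *; cbn [fst snd] in *.
  replace ((fst O - fst O)) with 0 in H by ring. replace ((snd O - snd O)) with 0 in H by ring.
  apply (Rmult_eq_reg_l (r^2)); [|apply pow_nonzero; lra].
  rewrite <- H at 2. unfold Rdiv. ring.
Qed.

Lemma loc_inj O r c s z w : 0 < r -> c^2 + s^2 = 1 -> loc O r c s z = loc O r c s w -> z = w.
Proof.
  intros Hr Hcs H.
  assert (D: dist2 z w = 0).
  { rewrite (loc_dist O r c s z w Hr Hcs). rewrite H. ring. }
  unfold dist2 in D.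
  pose proof (pow2_ge_0 (fst z - fst w)). pose proof (pow2_ge_0 (snd z - snd w)).
  assert (A1: (fst z - fst w)^2 = 0) by lra. assert (A2: (snd z - snd w)^2 = 0) by lra.
  apply sq0 in A1. apply sq0 in A2.
  destruct z, w; cbn [fst snd] in *. f_equal; lra.
Qed.

Definition pt_at (z w : pt) (t : R) : pt := (fst z + t*(fst w - fst z), snd z + t*(snd w - snd z)).

Lemma line_at z w t : on_line z w (pt_at z w t).
Proof. unfold on_line, pt_at; cbn [fst snd]. ring. Qed.

Lemma line_param z w x : z <> w -> on_line z w x ->
  x = pt_at z w (((fst x - fst z)*(fst w - fst z) + (snd x - snd z)*(snd w - snd z)) /
                 ((fst w - fst z)^2 + (snd w - snd z)^2)).
Proof.
  intros Hne H. unfold on_line in H.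
  assert (HD: 0 < (fst w - fst z)^2 + (snd w - snd z)^2).
  { destruct (Rle_lt_dec ((fst w - fst z)^2 + (snd w - snd z)^2) 0); auto.
    exfalso. apply Hne.
    pose proof (pow2_ge_0 (fst w - fst z)). pose proof (pow2_ge_0 (snd w - snd z)).
    assert (A1: (fst w - fst z)^2 = 0) by lra. assert (A2: (snd w - snd z)^2 = 0) by lra.
    apply sq0 in A1. apply sq0 in A2.
    destruct z, w; cbn [fst snd] in *. f_equal; lra. }
  destruct x as [x1 x2]. unfold pt_at; cbn [fst snd] in *.
  set (D1 := fst w - fst z) in *. set (D2 := snd w - snd z) in *.
  assert (K1: (x1 - fst z)*(D1^2+D2^2) = ((x1 - fst z)*D1 + (x2 - snd z)*D2)*D1).
  { transitivity (((x1 - fst z)*D1 + (x2 - snd z)*D2)*D1 + D2*((x1 - fst z)*D2 - (x2 - snd z)*D1)).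
    ring. rewrite H. ring. }
  assert (K2: (x2 - snd z)*(D1^2+D2^2) = ((x1 - fst z)*D1 + (x2 - snd z)*D2)*D2).
  { transitivity (((x1 - fst z)*D1 + (x2 - snd z)*D2)*D2 - D1*((x1 - fst z)*D2 - (x2 - snd z)*D1)).
    ring. rewrite H. ring. }
  f_equal.
  - apply (Rplus_eq_reg_r (- fst z)). apply (Rmult_eq_reg_r (D1^2+D2^2)); [|lra].
    replace ((fst z + ((x1 - fst z) * D1 + (x2 - snd z) * D2) / (D1 ^ 2 + D2 ^ 2) * D1 + - fst z) *
      (D1 ^ 2 + D2 ^ 2)) with (((x1 - fst z) * D1 + (x2 - snd z) * D2)*D1) by (field; lra).
    rewrite <- K1. ring.
  - apply (Rplus_eq_reg_r (- snd z)). apply (Rmult_eq_reg_r (D1^2+D2^2)); [|lra].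
    replace ((snd z + ((x1 - fst z) * D1 + (x2 - snd z) * D2) / (D1 ^ 2 + D2 ^ 2) * D2 + - snd z) *
      (D1 ^ 2 + D2 ^ 2)) with (((x1 - fst z) * D1 + (x2 - snd z) * D2)*D2) by (field; lra).
    rewrite <- K2. ring.
Qed.

Lemma ell_at O a b r c s z w t : 0 < r ->
  on_ellipse O a b c s (pt_at z w t) <->
  Ef a b r (fst (loc O r c s z)) (snd (loc O r c s z)) (fst (loc O r c s w)) (snd (loc O r c s w)) t = 0.
Proof.
  intros Hr. unfold on_ellipse, Ef, loc, pt_at; cbn [fst snd].
  replace (r * ((c * (fst z - fst O) + s * (snd z - snd O)) / r) +
     t * (r * ((c * (fst w - fst O) + s * (snd w - snd O)) / r -
               (c * (fst z - fst O) + s * (snd z - snd O)) / r)))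
    with (c * (fst z + t * (fst w - fst z) - fst O) + s * (snd z + t * (snd w - snd z) - snd O))
    by (field; lra).
  replace (r * ((- s * (fst z - fst O) + c * (snd z - snd O)) / r) +
     t * (r * ((- s * (fst w - fst O) + c * (snd w - snd O)) / r -
               (- s * (fst z - fst O) + c * (snd z - snd O)) / r)))
    with (- s * (fst z + t * (fst w - fst z) - fst O) + c * (snd z + t * (snd w - snd z) - snd O))
    by (field; lra).
  split; intros; lra.
Qed.

Lemma loc_tang O a b r c s z w : 0 < a -> 0 < b -> 0 < r -> c^2 + s^2 = 1 ->
  on_circle O r z -> on_circle O r w -> tangent_line O a b c s z w ->
  Frel (r^2-a^2+b^2) (r^2+a^2-b^2) (a^2+b^2-r^2) (loc O r c s z) (loc O r c s w).
Proof.
  intros Ha Hb Hr Hcs Cz Cw [Hne [x0 [[E0 L0] U0]]].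
  pose proof (loc_unit O r c s z Hr Hcs Cz) as Uz. pose proof (loc_unit O r c s w Hr Hcs Cw) as Uw.
  unfold unitv in Uz, Uw. unfold Frel.
  pose proof (line_param z w x0 Hne L0) as P0.
  set (t0 := ((fst x0 - fst z)*(fst w - fst z) + (snd x0 - snd z)*(snd w - snd z)) /
                 ((fst w - fst z)^2 + (snd w - snd z)^2)) in P0.
  apply (tang_alg a b r _ _ _ _ t0); auto.
  - destruct (Req_dec (fst (loc O r c s z)) (fst (loc O r c s w))) as [h1|h1]; auto.
    destruct (Req_dec (snd (loc O r c s z)) (snd (loc O r c s w))) as [h2|h2]; auto.
    exfalso. apply Hne. apply (loc_inj O r c s); auto.
    destruct (loc O r c s z), (loc O r c s w); cbn [fst snd] in *. f_equal; auto.
  - apply (proj1 (ell_at O a b r c s z w t0 Hr)). rewrite <- P0. auto.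
  - intros t Ht. apply (proj2 (ell_at O a b r c s z w t Hr)) in Ht.
    assert (Eq: pt_at z w t = x0) by (symmetry; apply U0; split; auto; apply line_at).
    rewrite P0 in Eq. unfold pt_at in Eq. injection Eq as e1 e2.
    destruct (Req_dec (fst w) (fst z)) as [h1|h1].
    + destruct (Req_dec (snd w) (snd z)) as [h2|h2].
      * exfalso. apply Hne. destruct z, w; cbn [fst snd] in *. f_equal; auto.
      * apply (Rmult_eq_reg_r (snd w - snd z)); lra.
    + apply (Rmult_eq_reg_r (fst w - fst z)); lra.
Qed.


Lemma orient p q e (X : nat -> pt) : good p q e -> (forall j, unitv (X j)) ->
  (forall j, X (S j) = Nv p q e (X j) \/ X (S j) = Pv p q e (X j)) ->
  (forall j, X (S (S j)) <> X j) ->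
  (forall j, X (S j) = Nv p q e (X j)) \/ (forall j, X (S j) = Pv p q e (X j)).
Proof.
  intros G U H Hne. destruct (H O) as [H0|H0]; [left|right]; intros j; induction j; auto.
  - destruct (H (S j)) as [h|h]; auto. exfalso. apply (Hne j).
    rewrite h, IHj, Pv_Nv; auto.
  - destruct (H (S j)) as [h|h]; auto. exfalso. apply (Hne j).
    rewrite h, IHj, Nv_Pv; auto.
Qed.

Lemma angle_exists x y : x^2 + y^2 = 1 -> exists t, cs t = (x, y).
Proof.
  intros U. assert (Hx: -1 <= x <= 1) by (split; nra).
  unfold cs.
  destruct (Rle_lt_dec 0 y).
  - exists (acos x). rewrite cos_acos, sin_acos; auto. f_equal.
    replace (1 - x²) with (y^2) by (unfold Rsqr; lra). rewrite <- Rsqr_pow2. apply sqrt_Rsqr; auto.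
  - exists (- acos x). rewrite cos_neg, sin_neg, cos_acos, sin_acos; auto. f_equal.
    replace (1 - x²) with ((-y)^2) by (unfold Rsqr; lra). rewrite <- Rsqr_pow2. rewrite sqrt_Rsqr; lra.
Qed.

Lemma seq_angle p q e (Y : nat -> pt) : good p q e -> unitv (Y O) ->
  (forall j, Y (S j) = Nv p q e (Y j)) -> exists t, forall j, Y j = cs (Niter p q e j t).
Proof.
  intros G U H. destruct (Y O) as [x y] eqn:EY.
  destruct (angle_exists x y U) as [t Ht]. exists t.
  induction j; simpl. rewrite Ht; auto.
  rewrite H, IHj, Nf_cs; auto.
Qed.

Definition sqd (X Y : pt) := (fst X - fst Y)^2 + (snd X - snd Y)^2.

Lemma sqd_cs a b : sqd (cs a) (cs b) = 2 - 2 * cos (a - b).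
Proof.
  unfold sqd, cs; cbn [fst snd]. rewrite cos_minus.
  pose proof (sin2_cos2 a). pose proof (sin2_cos2 b). unfold Rsqr in *. nra.
Qed.

Lemma sqd_Rf X Y : sqd (Rf X) (Rf Y) = sqd X Y.
Proof. unfold sqd, Rf; cbn [fst snd]. ring. Qed.

Lemma fold_sumf (f : nat -> R) m n :
  fold_right Rplus 0 (map f (seq m n)) = sumf n (fun j => f (m + j)%nat).
Proof.
  revert m; induction n; intros m; simpl; auto.
  rewrite IHn, Nat.add_0_r. f_equal. apply sumf_ext. intros j. f_equal. lia.
Qed.

Lemma sumf_ext_lt n F G : (forall j, (j < n)%nat -> F j = G j) -> sumf n F = sumf n G.
Proof.
  revert F G; induction n; intros F G Hj; simpl; auto.
  rewrite Hj by lia. f_equal. apply IHn. intros; apply Hj; lia.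
Qed.


Lemma good_of O r a b c s : 0 < r -> 0 < a -> 0 < b -> c ^ 2 + s ^ 2 = 1 ->
  (forall p : pt, on_ellipse O a b c s p -> dist2 p O < r ^ 2) ->
  good (r^2-a^2+b^2) (r^2+a^2-b^2) (a^2+b^2-r^2).
Proof.
  intros Hr Ha Hb Hcs Hin.
  assert (A: a^2 < r^2).
  { assert (E: on_ellipse O a b c s (fst O + c*a, snd O + s*a)).
    { unfold on_ellipse; cbv zeta; cbn [fst snd].
      replace (c * (fst O + c * a - fst O) + s * (snd O + s * a - snd O)) with ((c^2+s^2)*a) by ring.
      replace (- s * (fst O + c * a - fst O) + c * (snd O + s * a - snd O)) with 0 by ring.
      rewrite Hcs. field. lra. }
    apply Hin in E. unfold dist2 in E; cbn [fst snd] in E.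
    replace ((fst O + c * a - fst O) ^ 2 + (snd O + s * a - snd O) ^ 2) with ((c^2+s^2)*a^2) in E by ring.
    rewrite Hcs in E. lra. }
  assert (B: b^2 < r^2).
  { assert (E: on_ellipse O a b c s (fst O - s*b, snd O + c*b)).
    { unfold on_ellipse; cbv zeta; cbn [fst snd].
      replace (c * (fst O - s * b - fst O) + s * (snd O + c * b - snd O)) with 0 by ring.
      replace (- s * (fst O - s * b - fst O) + c * (snd O + c * b - snd O)) with ((c^2+s^2)*b) by ring.
      rewrite Hcs. field. lra. }
    apply Hin in E. unfold dist2 in E; cbn [fst snd] in E.
    replace ((fst O - s * b - fst O) ^ 2 + (snd O + c * b - snd O) ^ 2) with ((c^2+s^2)*b^2) in E by ring.
    rewrite Hcs in E. lra. }
  assert (0 < a^2) by nra. assert (0 < b^2) by nra.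
  unfold good. repeat split; lra.
Qed.

Lemma poly_seq O r a b c s n u : 0 < r -> 0 < a -> 0 < b -> c ^ 2 + s ^ 2 = 1 ->
  (forall p : pt, on_ellipse O a b c s p -> dist2 p O < r ^ 2) ->
  poncelet_ngon O r O a b c s n u ->
  exists t, cs (Niter (r^2-a^2+b^2) (r^2+a^2-b^2) (a^2+b^2-r^2) n t) = cs t /\
   forall k, diag_sum n k u = sumf n (fun _ => 2*r^2) -
      2*r^2 * Sf (r^2-a^2+b^2) (r^2+a^2-b^2) (a^2+b^2-r^2) n k t.
Proof.
  intros Hr Ha Hb Hcs Hin [Hn3 HP].
  pose proof (good_of O r a b c s Hr Ha Hb Hcs Hin) as G.
  set (p := r^2-a^2+b^2) in *. set (q := r^2+a^2-b^2) in *. set (e := a^2+b^2-r^2) in *.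
  assert (Hn0: n <> 0%nat) by lia.
  set (X := fun j => loc O r c s (u (j mod n))).
  assert (HU: forall j, unitv (X j)).
  { intros j. apply loc_unit; auto. apply (HP (j mod n)). apply Nat.mod_upper_bound; auto. }
  assert (Hmod1: forall j, ((j mod n + 1) mod n = (S j) mod n)%nat).
  { intros j. rewrite Nat.add_mod_idemp_l; auto. f_equal. lia. }
  assert (Hmod2: forall j, ((j mod n + 2) mod n = (S (S j)) mod n)%nat).
  { intros j. rewrite Nat.add_mod_idemp_l; auto. f_equal. lia. }
  assert (HF: forall j, Frel p q e (X j) (X (S j))).
  { intros j. unfold X. destruct (HP (j mod n)) as [C1 [T1 _]]. apply Nat.mod_upper_bound; auto.
    rewrite Hmod1 in T1. apply loc_tang; auto.
    apply (HP (S j mod n)). apply Nat.mod_upper_bound; auto. }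
  assert (HNE: forall j, X (S (S j)) <> X j).
  { intros j Heq. unfold X in Heq. apply loc_inj in Heq; auto.
    destruct (HP (j mod n)) as [_ [_ N1]]. apply Nat.mod_upper_bound; auto.
    rewrite Hmod2 in N1. auto. }
  assert (H2: forall j, X (S j) = Nv p q e (X j) \/ X (S j) = Pv p q e (X j)).
  { intros j. apply two_sol; auto. }
  assert (Hper: X n = X 0%nat).
  { unfold X. rewrite Nat.mod_same, Nat.mod_0_l; auto. }
  assert (HY: exists Y : nat -> pt, (forall j, Y (S j) = Nv p q e (Y j)) /\ unitv (Y 0%nat) /\
     Y n = Y 0%nat /\ forall i j, sqd (Y i) (Y j) = sqd (X i) (X j)).
  { destruct (orient p q e X G HU H2 HNE) as [Hf|Hb'].
    - exists X. auto.
    - exists (fun j => Rf (X j)). repeat split.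
      + intros j. rewrite Hb', Nv_Rf. auto.
      + apply unitv_Rf; auto.
      + rewrite Hper; auto.
      + intros; apply sqd_Rf. }
  destruct HY as [Y [HY1 [HY2 [HY3 HY4]]]].
  destruct (seq_angle p q e Y G HY2 HY1) as [t Ht].
  exists t. split.
  { rewrite <- Ht. rewrite HY3. rewrite Ht. auto. }
  intros k. unfold diag_sum. rewrite fold_sumf.
  unfold Sf. rewrite <- sumf_scal, <- sumf_minus.
  apply sumf_ext_lt. intros j Hj. simpl (0 + j)%nat.
  replace (u j) with (u (j mod n)) by (rewrite Nat.mod_small; auto).
  rewrite (loc_dist O r c s _ _ Hr Hcs).
  fold (X j). replace ((j + k) mod n)%nat with ((j + k) mod n)%nat by auto. fold (X (j+k)%nat).
  fold (sqd (X (j + k)%nat) (X j)). rewrite <- HY4, !Ht, sqd_cs.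
  rewrite (Nat.add_comm j k). ring.
Qed.

Theorem corollary6p3 :
  forall (O : pt) (r a b c s : R) (n : nat) (u v : nat -> pt),
    0 < r -> 0 < a -> 0 < b -> c ^ 2 + s ^ 2 = 1 ->
    (forall p : pt, on_ellipse O a b c s p -> dist2 p O < r ^ 2) ->
    poncelet_ngon O r O a b c s n u ->
    poncelet_ngon O r O a b c s n v ->
    forall k : nat, diag_sum n k u = diag_sum n k v.
Proof.
  intros O r a b c s n u v Hr Ha Hb Hcs Hin Pu Pv k.
  pose proof (good_of O r a b c s Hr Ha Hb Hcs Hin) as G.
  destruct (poly_seq O r a b c s n u Hr Ha Hb Hcs Hin Pu) as [tu [Hpu Du]].
  destruct (poly_seq O r a b c s n v Hr Ha Hb Hcs Hin Pv) as [tv [_ Dv]].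
  rewrite Du, Dv. f_equal. f_equal. apply (core _ _ _ n k tu G Hpu).
Qed.
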